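(* Let $\mathbb G$ be a homogeneous Lie group, $\delta>0$ and $P\in\bar{\operatorname T}_{<\delta}$. If for some $\varepsilon\in[0,1]$ one has $|(X^I\Pi_eP)(e)|\le\varepsilon^{\delta-d(I)}$ for all multi-indices $I\in\mathbb N^d$ with $d(I)<\delta$, then $|P|_a\lesssim_{\delta,\mathbb G}\varepsilon^{\delta-a}$ for all $a\le\delta$.
   Context: $\mathbb{G}$ is a connected, simply connected Lie group with Lie algebra $\mathfrak g$ (identified with left-invariant vector fields) equipped with dilations $D_r=\exp(\log r\,\mathfrak s)$ (Lie algebra automorphisms, $\mathfrak s$ diagonalisable with smallest eigenvalue $1$); basis $X_1,\dots,X_d$ with $\mathfrak sX_j=\mathfrak s_jX_j$; coordinates $\eta_j=\zeta_j\circ\exp^{-1}$ ($\zeta_j$ the dual basis); for $I\in\mathbb N^d$, $\eta^I=\prod\eta_j^{i_j}$, $d(I)=\sum\mathfrak s_ji_j$, $X^I=X_1^{i_1}\cdots X_d^{i_d}$. $\bar{\operatorname T}$ is the vector space with basis the abstract monomials $\pmb\eta^I$, $I\in\mathbb N^d$, graded by $\bar{\operatorname T}_a=\mathrm{span}\{\pmb\eta^I:d(I)=a\}$, each $\bar{\operatorname T}_a$ equipped with a fixed norm; for $P\in\bar{\operatorname T}$, $|P|_a$ is the norm of its $\bar{\operatorname T}_a$-component, and $\bar{\operatorname T}_{<\delta}=\bigoplus_{a<\delta}\bar{\operatorname T}_a$. $\Pi_e$ is the linear map sending $\pmb\eta^I$ to the function $\eta^I$ on $\mathbb G$. *)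

(* Defs.v *)
From HB Require Import structures.
From mathcomp Require Import all_boot all_order all_algebra.
From mathcomp Require Import all_classical all_reals all_analysis.
From mathcomp Require mpoly.
Set Implicit Arguments. Unset Strict Implicit. Unset Printing Implicit Defensive.
Import Order.TTheory GRing.Theory Num.Theory.
Local Open Scope classical_set_scope.
Local Open Scope ring_scope.

(* A homogeneous Lie group, written in exponential coordinates
   eta_j = zeta_j o exp^{-1} w.r.t. an eigenbasis X_1..X_d of the dilation
   generator s (s X_j = s_j X_j).  The point x of G is identified with the
   row vector (eta_1(x),...,eta_d(x)); the identity e is 0 and
   exp(t X) = t * X in these coordinates. *)
Record homgroup (R : realType) (d : nat) := HomGroup {
  hg_mul : 'rV[R]_d -> 'rV[R]_d -> 'rV[R]_d;
  hg_s : 'I_d -> R;   (* eigenvalues s_j of the dilation generator *)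
  hg_poly : forall j : 'I_d, exists p : mpoly.mpoly (d + d) R,
      forall x y, hg_mul x y ord0 j = mpoly.meval (fun k => row_mx x y ord0 k) p;
  hg_assoc : forall x y z, hg_mul x (hg_mul y z) = hg_mul (hg_mul x y) z;
  hg_unit_l : forall x, hg_mul 0 x = x;
  hg_unit_r : forall x, hg_mul x 0 = x;
  (* exponential coordinates: t |-> t x is the one-parameter subgroup exp(tX) *)
  hg_exp : forall x (s t : R), hg_mul (s *: x) (t *: x) = (s + t) *: x;
  hg_dil : forall (r : R), 0 < r -> forall x y,
      let D := fun z : 'rV[R]_d => \row_j (powR r (hg_s j) * z ord0 j) in
      D (hg_mul x y) = hg_mul (D x) (D y);
  hg_s_ge1 : forall j, 1 <= hg_s j;
  hg_s_min : exists j, hg_s j = 1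
}.

Definition mi (d : nat) := {ffun 'I_d -> nat}.

Section Defs.
Variables (R : realType) (d : nat) (G : homgroup R d).

Definition hdeg (I : mi d) : R := \sum_(j < d) hg_s G j * (I j)%:R.

(* unit vector: coordinates of exp(X_j) *)
Definition ev (j : 'I_d) : 'rV[R]_d := \row_k (k == j)%:R.

Definition Xf (j : 'I_d) (f : 'rV[R]_d -> R) : 'rV[R]_d -> R :=
  fun x => derive1 (fun t : R => f (hg_mul G x (t *: ev j))) 0.

Definition XI (I : mi d) (f : 'rV[R]_d -> R) : 'rV[R]_d -> R :=
  foldr (fun j g => iter (I j) (Xf j) g) f (enum 'I_d).

(* An element P of bar T is a finitely supported coefficient family
   (coefficient of the abstract monomial eta^I).  P in bar T_{<delta}
   means its support is contained in {I | d(I) < delta}. *)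
Definition in_Tlt (delta : R) (P : mi d -> R) : Prop :=
  forall I, P I != 0 -> hdeg I < delta.

Definition eta_mon (I : mi d) (x : 'rV[R]_d) : R := \prod_(j < d) x ord0 j ^+ I j.

Definition Pi_e (P : mi d -> R) (x : 'rV[R]_d) : R :=
  \sum_(I \in [set I : mi d | P I != 0]) P I * eta_mon I x.

Definition Tcomp (a : R) (P : mi d -> R) : mi d -> R :=
  fun I => if hdeg I == a then P I else 0.

(* n is a norm on the (finite-dimensional) space bar T_a, viewed as the
   coefficient families supported in {I | d(I) = a} *)
Definition grade_norm (a : R) (n : (mi d -> R) -> R) : Prop :=
  let Ta := fun f : mi d -> R => forall I, hdeg I != a -> f I = 0 in
  (forall f g, Ta f -> Ta g -> n (fun I => f I + g I) <= n f + n g) /\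
  (forall (c : R) f, Ta f -> n (fun I => c * f I) = `|c| * n f) /\
  (forall f, Ta f -> n f = 0 -> forall I, f I = 0).

End Defs.

(* Main.v *)
Require Import Defs.
From HB Require Import structures.
From mathcomp Require Import all_boot all_order all_algebra.
From mathcomp Require Import mpoly.
From mathcomp Require Import all_classical all_reals all_analysis.
From mathcomp Require Import ring lra zify.
Set Implicit Arguments. Unset Strict Implicit. Unset Printing Implicit Defensive.
Import Order.TTheory GRing.Theory Num.Theory.
Local Open Scope ring_scope.

Section Chain.
Variables (R : realType) (n : nat).
Notation MP := (mpoly.mpoly n R).

Definition Qd (p : MP) := forall (v : R -> 'I_n -> R) (dv : 'I_n -> R) (t0 : R),
  (forall i, is_derive t0 1 (fun t => v t i) (dv i)) ->
  is_derive t0 1 (fun t => mpoly.meval (v t) p)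
     (\sum_i mpoly.meval (v t0) (mpoly.mderiv i p) * dv i).

Lemma Qd_C c : Qd (mpoly.mpolyC n c).
Proof.
move=> v dv t0 _.
under eq_bigr do rewrite mpoly.mderivC mpoly.meval0 mul0r.
rewrite big1 //.
under eq_fun do rewrite mpoly.mevalC.
exact: is_derive_cst.
Qed.

Lemma Qd_X j : Qd (mpoly.mpolyX R (mpoly.mnm1 j)).
Proof.
move=> v dv t0 hv.
have -> : (\sum_i mpoly.meval (v t0) (mpoly.mderiv i (mpoly.mpolyX R (mpoly.mnm1 j))) * dv i) = dv j.
  rewrite (bigD1 j) //= big1 ?addr0.
    rewrite mpoly.mderivX mpoly.mnm1E eqxx mpoly.mevalZ mpoly.mevalX.
    rewrite big1 ?mulr1 ?mul1r // => i _.
    by rewrite mpoly.mnmBE subnn expr0.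
  move=> i /negPf ij.
  by rewrite mpoly.mderivX mpoly.mnm1E eq_sym ij mpoly.mevalZ mul0r mul0r.
under eq_fun do rewrite mpoly.mevalXU.
exact: hv.
Qed.

Lemma Qd_D p q : Qd p -> Qd q -> Qd (p + q).
Proof.
move=> hp hq v dv t0 hv.
have -> : (fun t => mpoly.meval (v t) (p + q)) =
   (fun t => mpoly.meval (v t) p) + (fun t => mpoly.meval (v t) q).
  by apply/funext => t; rewrite mpoly.mevalD.
under eq_bigr do rewrite mpoly.mderivD mpoly.mevalD mulrDl.
rewrite big_split /=.
exact: is_deriveD (hp _ _ _ hv) (hq _ _ _ hv).
Qed.

Lemma Qd_M p q : Qd p -> Qd q -> Qd (p * q).
Proof.
move=> hp hq v dv t0 hv.
have -> : (fun t => mpoly.meval (v t) (p * q)) =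
   (fun t => mpoly.meval (v t) p) * (fun t => mpoly.meval (v t) q).
  by apply/funext => t; rewrite mpoly.mevalM.
apply: is_derive_eq.
  exact: is_deriveM (hp _ _ _ hv) (hq _ _ _ hv).
rewrite /= !scaler_sumr /= -big_split /=; apply: eq_bigr => i _.
rewrite mpoly.mderivM mpoly.mevalD !mpoly.mevalM /GRing.scale /=.
ring.
Qed.

Lemma Qd_all p : Qd p.
Proof.
elim/mpoly.mpolyind: p => [|c m p _ _ hp].
  by rewrite -mpoly.mpolyC0; exact: Qd_C.
apply: Qd_D => //.
rewrite -mpoly.mul_mpolyC; apply: Qd_M; first exact: Qd_C.
rewrite mpoly.mpolyXE_id.
apply: (big_ind Qd); first by rewrite -mpoly.mpolyC1; exact: Qd_C.
  exact: Qd_M.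
move=> i _; elim: (m i) => [|k ih].
  by rewrite expr0 -mpoly.mpolyC1; exact: Qd_C.
by rewrite exprS; apply: Qd_M => //; exact: Qd_X.
Qed.

End Chain.

Section Ord.
Variables (R : realType) (n : nat).
Implicit Types p q : {mpoly R[n]}.

Definition Ord (m : nat) p := forall mm : 'X_{1..n}, (mdeg mm < m)%N -> p@_mm = 0.

Lemma Ord0 p : Ord 0 p. Proof. by []. Qed.

Lemma Ord_le a b p : (a <= b)%N -> Ord b p -> Ord a p.
Proof. by move=> ab h mm lt; apply: h; exact: leq_trans lt ab. Qed.

Lemma Ord_D m p q : Ord m p -> Ord m q -> Ord m (p + q).
Proof. by move=> hp hq mm lt; rewrite mcoeffD hp ?hq ?addr0. Qed.

Lemma Ord_B m p q : Ord m p -> Ord m q -> Ord m (p - q).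
Proof. by move=> hp hq mm lt; rewrite mcoeffB hp ?hq ?subr0. Qed.

Lemma Ord_Z m c p : Ord m p -> Ord m (c *: p).
Proof. by move=> hp mm lt; rewrite mcoeffZ hp ?mulr0. Qed.

Lemma Ord_sum m (I : Type) (s : seq I) (F : I -> {mpoly R[n]}) :
  (forall i, Ord m (F i)) -> Ord m (\sum_(i <- s) F i).
Proof.
move=> h; elim: s => [|i s ih]; first by rewrite big_nil => mm _; rewrite mcoeff0.
by rewrite big_cons; apply: Ord_D.
Qed.

Lemma Ord_M a b p q : Ord a p -> Ord b q -> Ord (a + b) (p * q).
Proof.
move=> hp hq mm lt; rewrite mcoeffM big1 // => k /eqP e.
have : (mdeg k.1 + mdeg k.2 < a + b)%N by rewrite -mdegD -e.
case: (ltnP (mdeg k.1) a) => [h1|h1] h.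
  by rewrite hp // mul0r.
rewrite hq ?mulr0 //; rewrite -(ltn_add2l (mdeg k.1)).
exact: leq_trans h (leq_add h1 (leqnn _)).
Qed.

Lemma Ord_mderiv m i p : Ord m p -> Ord m.-1 (mderiv i p).
Proof.
move=> hp mm lt; rewrite mcoeff_mderiv hp ?mul0rn //.
rewrite mdegD mdeg1 addn1; case: m hp lt => //.
Qed.

Lemma Ord_const p : Ord 1 (p - (p@_0%MM)%:MP).
Proof.
move=> mm; rewrite ltnS leqn0 mdeg_eq0 => /eqP ->.
by rewrite mcoeffB mcoeffC eqxx mulr1 subrr.
Qed.

Lemma meval0_coef p : p.@[fun _ => 0] = p@_0%MM.
Proof.
elim/mpolyind: p => [|c m p _ _ ih]; first by rewrite meval0 mcoeff0.
rewrite mevalD mcoeffD ih mevalZ mcoeffZ mevalX mcoeffX; congr (_ * _ + _).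
case: (eqVneq m 0%MM) => [->|nz].
  by rewrite big1 // => i _; rewrite mnm0E expr0.
have [i hi] : exists i, (0 < m i)%N.
  apply/existsP; apply: contraNT nz; rewrite negb_exists => /forallP h.
  apply/eqP/mnmP => i; rewrite mnm0E; move: (h i); by rewrite lt0n negbK => /eqP.
rewrite (bigD1 i) //= expr0n gtn_eqF // mul0r.
by rewrite ?(negPf nz).
Qed.

End Ord.

Lemma is_derive_lin (R : realType) (a : R) : is_derive (0:R) 1 (fun t : R => a * t) a.
Proof.
have h := is_deriveZ a (@is_derive_id R R (0:R) (1:R)).
eapply is_derive_eq; [exact h|].
by rewrite -[LHS]/(a * 1) mulr1.
Qed.

Section Grp.
Variables (R : realType) (d : nat) (G : homgroup R d).
Variable q : 'I_d -> {mpoly R[d + d]}.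
Hypothesis hq : forall k x y, hg_mul G x y ord0 k = mpoly.meval (fun i => row_mx x y ord0 i) (q k).

Definition pfun (p : {mpoly R[d]}) (x : 'rV[R]_d) : R := p.@[fun k => x ord0 k].

Definition lq : (d + d).-tuple {mpoly R[d]} :=
  [tuple (match fintype.split i with inl a => 'X_a | inr _ => 0 end) | i < d + d].

Definition Acoef (j k : 'I_d) : {mpoly R[d]} :=
  (\sum_i (row_mx 0 (ev R j) ord0 i) *: mderiv i (q k)) \mPo lq.

Lemma curve_derive_c x j k c :
  is_derive (0:R) 1 (fun t : R => hg_mul G x ((c * t) *: ev R j) ord0 k) (c * pfun (Acoef j k) x).
Proof.
under eq_fun do rewrite hq.
apply: is_derive_eq.
  apply: (@Qd_all R (d + d) (q k) (fun t i => row_mx x ((c * t) *: ev R j) ord0 i)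
     (fun i => c * row_mx 0 (ev R j) ord0 i)).
  move=> i; rewrite -(fintype.splitK i); case: (fintype.split i) => a /=.
    under eq_fun do rewrite row_mxEl.
    rewrite row_mxEl mxE mulr0; exact: is_derive_cst.
  under eq_fun do rewrite row_mxEr mxE.
  rewrite row_mxEr.
  have -> : (fun t : R => (c * t) * ev R j ord0 a) = (fun t => (c * ev R j ord0 a) * t).
    by apply/funext => t /=; ring.
  have h := is_deriveZ (c * ev R j ord0 a) (@is_derive_id R R (0:R) (1:R)).
  eapply is_derive_eq; [exact h|].
  by rewrite -[LHS]/((c * ev R j ord0 a) * 1) mulr1.
rewrite /pfun /Acoef comp_mpoly_meval raddf_sum /= mulr_sumr.
apply: eq_bigr => i _; rewrite mevalZ.
rewrite mulrCA; congr (_ * _); rewrite mulrC; congr (_ * _).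
apply: meval_eq => l; rewrite tnth_mktuple -(fintype.splitK l).
case: (fintype.split l) => a; rewrite unsplitK /=.
  by rewrite mevalXU row_mxEl.
by rewrite meval0 row_mxEr mulr0 scale0r mxE.
Qed.

Lemma curve_derive x j k :
  is_derive (0:R) 1 (fun t : R => hg_mul G x (t *: ev R j) ord0 k) (pfun (Acoef j k) x).
Proof.
have h := curve_derive_c x j k 1; rewrite mul1r in h.
have -> : (fun t => hg_mul G x (t *: ev R j) ord0 k) =
   (fun t => hg_mul G x ((1 * t) *: ev R j) ord0 k) by apply/funext => t; rewrite mul1r.
exact: h.
Qed.

Definition Xp (j : 'I_d) (p : {mpoly R[d]}) : {mpoly R[d]} :=
  \sum_k Acoef j k * mderiv k p.

Lemma Xf_pfun j p : Xf G j (pfun p) = pfun (Xp j p).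
Proof.
apply/funext => x; rewrite /Xf derive1E.
have h := @Qd_all R d p (fun t k => hg_mul G x (t *: ev R j) ord0 k)
   (fun k => pfun (Acoef j k) x) 0 (fun k => curve_derive x j k).
rewrite /pfun in h *; rewrite (@derive_val _ _ _ _ _ _ _ h) /Xp raddf_sum /=.
apply: eq_bigr => k _; rewrite mevalM mulrC; congr (_ * _).
by apply: meval_eq => l; rewrite scale0r hg_unit_r.
Qed.

Definition XpI (I : mi d) (p : {mpoly R[d]}) : {mpoly R[d]} :=
  foldr (fun j g => iter (I j) (Xp j) g) p (enum 'I_d).

Lemma XI_pfun I p : XI G I (pfun p) = pfun (XpI I p).
Proof.
rewrite /XI /XpI; elim: (enum 'I_d) => //= j s ->.
by elim: (I j) => //= k ->; rewrite Xf_pfun.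
Qed.

Lemma Xf_gen c y j p :
  is_derive (0:R) 1 (fun t : R => pfun p (hg_mul G y ((c * t) *: ev R j))) (c * pfun (Xp j p) y).
Proof.
have h := @Qd_all R d p (fun t k => hg_mul G y ((c * t) *: ev R j) ord0 k)
   (fun k => c * pfun (Acoef j k) y) 0 (fun k => curve_derive_c y j k c).
eapply is_derive_eq; [exact h|].
rewrite /Xp /pfun raddf_sum /= mulr_sumr.
apply: eq_bigr => k _; rewrite mevalM.
have -> : (mderiv k p).@[fun l => hg_mul G y ((c * 0) *: ev R j) ord0 l] =
    (mderiv k p).@[fun l => y ord0 l].
  by apply: meval_eq => l; rewrite mulr0 scale0r hg_unit_r.
ring.
Qed.

Definition Dr (r : R) (z : 'rV[R]_d) : 'rV[R]_d := \row_j (powR r (hg_s G j) * z ord0 j).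

Lemma Dr_ev r t j : Dr r (t *: ev R j) = (powR r (hg_s G j) * t) *: ev R j.
Proof.
apply/rowP => k; rewrite /Dr /ev !mxE.
case: (eqVneq k j) => [->|kj]; first by rewrite mulrA.
by rewrite !mulr0.
Qed.

Lemma hom_step r (hr : 0 < r) j c p :
  Xf G j (fun y => c * pfun p (Dr r y)) =
  (fun y => (c * powR r (hg_s G j)) * pfun (Xp j p) (Dr r y)).
Proof.
apply/funext => x; rewrite /Xf derive1E.
have -> : (fun t => c * pfun p (Dr r (hg_mul G x (t *: ev R j)))) =
   c \*: (fun t => pfun p (hg_mul G (Dr r x) ((powR r (hg_s G j) * t) *: ev R j))).
  apply/funext => t /=; congr (_ * _); congr (pfun p _).
  by rewrite -Dr_ev; apply: (hg_dil G hr).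
have h := Xf_gen (powR r (hg_s G j)) (Dr r x) j p.
rewrite (@derive_val _ _ _ _ _ _ _ (is_deriveZ c h)).
by rewrite /GRing.scale /= mulrA.
Qed.

Lemma Acoef0 j k : (Acoef j k)@_0%MM = (k == j)%:R.
Proof.
have h := curve_derive 0 j k.
have e1 : (fun t => hg_mul G 0 (t *: ev R j) ord0 k) = (fun t => (k == j)%:R * t).
  by apply/funext => t; rewrite hg_unit_l /ev !mxE mulrC.
rewrite e1 in h.
have h2 := is_derive_lin ((k == j)%:R : R).
rewrite -meval0_coef.
have e : pfun (Acoef j k) 0 = (Acoef j k).@[fun _ => 0].
  by apply: meval_eq => l; rewrite mxE.
by rewrite -e -(@derive_val _ _ _ _ _ _ _ h) (@derive_val _ _ _ _ _ _ _ h2).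
Qed.

Definition Bc j k := Acoef j k - ((Acoef j k)@_0%MM)%:MP.

Lemma Bc_ord j k : Ord 1 (Bc j k).
Proof. exact: Ord_const. Qed.

Lemma Xp_split j p : Xp j p = mderiv j p + \sum_k Bc j k * mderiv k p.
Proof.
have -> : Xp j p = \sum_k (Bc j k * mderiv k p + ((k == j)%:R)%:MP * mderiv k p).
  apply: eq_bigr => k _; rewrite -mulrDl /Bc -Acoef0 subrK //.
rewrite big_split /= addrC; congr (_ + _).
rewrite (bigD1 j) //= eqxx mpolyC1 mul1r big1 ?addr0 // => k /negPf ->.
by rewrite mpolyC0 mul0r.
Qed.

Lemma XpL_ord N p (L : seq 'I_d) : Ord N p ->
  Ord (N - size L)%N (foldr Xp p L) /\ ((size L <= N)%N -> Ord (N - size L + 1)%N (foldr Xp p L - foldr (@mderiv _ _) p L)).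
Proof.
move=> hp; elim: L => [|j L [ih1 ih2]] /=.
  split; first by rewrite subn0.
  by move=> _; rewrite subrr => mm _; rewrite mcoeff0.
split.
  rewrite /Xp; apply: Ord_sum => k.
  rewrite -[(N - _)%N]add0n; apply: Ord_M; first exact: Ord0.
  by rewrite subnS; apply: Ord_mderiv.
move=> hs.
have hs' : (size L < N)%N by [].
rewrite Xp_split (addrC (mderiv j _)) -addrA -mderivB.
apply: Ord_D.
  apply: Ord_sum => k.
  have -> : (N - (size L).+1 + 1 = 1 + (N - size L).-1)%N.
    by lia.
  apply: Ord_M; first exact: Bc_ord.
  exact: Ord_mderiv.
have -> : (N - (size L).+1 + 1 = (N - size L + 1).-1)%N.
  by lia.
apply: Ord_mderiv; exact: ih2 (ltnW hs').
Qed.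

Lemma powRD' (r a b : R) : 0 < r -> powR r (a + b) = powR r a * powR r b.
Proof. by move=> hr; rewrite powRD // (gt_eqF hr) implybT. Qed.

Lemma hom_iter r (hr : 0 < r) j k c p :
  iter k (Xf G j) (fun y => c * pfun p (Dr r y)) =
  (fun y => (c * powR r (hg_s G j * k%:R)) * pfun (iter k (Xp j) p) (Dr r y)).
Proof.
elim: k => [|k ih] /=.
  by apply/funext => y; rewrite mulr0 powRr0 mulr1.
rewrite ih hom_step //; apply/funext => y; congr (_ * _).
by rewrite -mulrA -powRD' // -addn1 natrD mulrDr mulr1.
Qed.

Lemma hom_XI r (hr : 0 < r) I c p :
  XI G I (fun y => c * pfun p (Dr r y)) =
  (fun y => (c * powR r (hdeg G I)) * pfun (XpI I p) (Dr r y)).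
Proof.
rewrite /XI /XpI /hdeg -big_enum /=.
elim: (enum 'I_d) => [|j s ih] /=.
  by rewrite big_nil powRr0 mulr1.
rewrite big_cons ih hom_iter //; apply/funext => y; congr (_ * _).
by rewrite -mulrA -powRD' // addrC.
Qed.

Definition mono (I : mi d) : 'X_{1..d} := [multinom I i | i < d].

Lemma pfun_eta J : pfun 'X_[mono J] = eta_mon J.
Proof.
apply/funext => x; rewrite /pfun mevalX /eta_mon; apply: eq_bigr => i _.
by rewrite mnmE.
Qed.

Lemma pfun0 p : pfun p 0 = p@_0%MM.
Proof. by rewrite -meval0_coef; apply: meval_eq => l; rewrite mxE. Qed.

Lemma Mv_def I J : XI G I (eta_mon J) 0 = (XpI I 'X_[mono J])@_0%MM.
Proof. by rewrite -pfun_eta XI_pfun pfun0. Qed.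

Lemma Dr1 y : Dr 1 y = y.
Proof. by apply/rowP => k; rewrite /Dr mxE powR1 mul1r. Qed.

Lemma Dr0 r : Dr r 0 = 0.
Proof. by apply/rowP => k; rewrite /Dr !mxE mulr0. Qed.

Lemma pfun_Dr_X r (hr : 0 < r) J y :
  pfun 'X_[mono J] (Dr r y) = powR r (hdeg G J) * pfun 'X_[mono J] y.
Proof.
rewrite !pfun_eta /eta_mon /hdeg.
have -> : \prod_(j < d) Dr r y ord0 j ^+ J j =
   \prod_(j < d) (powR r (hg_s G j * (J j)%:R) * y ord0 j ^+ J j).
  apply: eq_bigr => j _; rewrite /Dr mxE exprMn powRrM powR_mulrn //.
  exact: powR_ge0.
rewrite big_split /=; congr (_ * _).
apply: (big_ind2 (fun a b => a = powR r b)) => //.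
  by rewrite powRr0.
by move=> a1 a2 b1 b2 -> ->; rewrite powRD'.
Qed.

Lemma Mv_hom I J : (XpI I 'X_[mono J])@_0%MM != 0 -> hdeg G I = hdeg G J.
Proof.
move=> nz.
have h2 : (0:R) < 2 by [].
have e1 := hom_XI h2 I 1 'X_[mono J].
have e2 : (fun y => 1 * pfun 'X_[mono J] (Dr 2 y)) =
    (fun y => powR 2 (hdeg G J) * pfun 'X_[mono J] (Dr 1 y)).
  by apply/funext => y; rewrite mul1r pfun_Dr_X // Dr1.
have e3 := hom_XI ltr01 I (powR 2 (hdeg G J)) 'X_[mono J].
rewrite e2 e3 in e1.
have := congr1 (fun f => f 0) e1 => /=.
rewrite !Dr0 pfun0 powR1 mulr1 mul1r => /(mulIf nz) e.
have ln2 : ln (2:R) != 0 by rewrite gt_eqF // ln_gt0 // ltr1n.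
by have := congr1 (@ln R) e; rewrite !ln_powR => /(mulIf ln2).
Qed.

Definition sI (I : mi d) := flatten [seq nseq (I j) j | j <- enum 'I_d].

Lemma XpI_sI I p : XpI I p = foldr Xp p (sI I).
Proof.
rewrite /XpI /sI; elim: (enum 'I_d) => //= j s ih.
by rewrite foldr_cat ih; elim: (I j) => //= k ->.
Qed.

Lemma mderivm_sI I (p : {mpoly R[d]}) : mderivm (mono I) p = foldr (@mderiv _ _) p (sI I).
Proof.
rewrite mderivm_foldr /sI; congr (foldr _ _ (flatten _)).
by apply: eq_map => i; rewrite mnmE.
Qed.

Lemma size_sI I : size (sI I) = mdeg (mono I).
Proof.
rewrite /sI size_flatten /shape -map_comp mdegE sumnE big_map big_enum /=.
by apply: eq_bigr => i _; rewrite size_nseq mnmE.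
Qed.

Lemma Ord_X (m : 'X_{1..d}) : Ord (mdeg m) ('X_[m] : {mpoly R[d]}).
Proof.
move=> mm lt; rewrite mcoeffX; case: eqP => // e.
by rewrite e ltnn in lt.
Qed.

Lemma Mv_F3 I J : (mdeg (mono I) < mdeg (mono J))%N -> (XpI I 'X_[mono J])@_0%MM = 0.
Proof.
move=> lt; rewrite XpI_sI.
have [h _] := XpL_ord (sI I) (@Ord_X (mono J)).
by apply: h; rewrite mdeg0 size_sI subn_gt0.
Qed.

Lemma Mv_F4 I J : mdeg (mono I) = mdeg (mono J) ->
  (XpI I 'X_[mono J])@_0%MM = if I == J then (\prod_(i < d) (I i)`!)%:R else 0.
Proof.
move=> e.
have [_ h] := XpL_ord (sI I) (@Ord_X (mono J)).
have h1 := h (eq_leq (etrans (size_sI I) e)).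
have := h1 0%MM; rewrite mdeg0 addn1 ltnS leq0n mcoeffB => /(_ isT) /eqP.
rewrite subr_eq0 -XpI_sI -mderivm_sI => /eqP ->.
rewrite mderivmX mcoeffZ mcoeffX.
case: (eqVneq I J) => [<-|nIJ].
  have -> : (mono I - mono I)%MM = 0%MM.
    by apply/mnmP => i; rewrite mnmBE subnn mnm0E.
  rewrite eqxx mulr1; congr (_%:R); apply: eq_bigr => i _.
  by rewrite !mnmE ffactnn.
have [i hi] : exists i, (J i < I i)%N.
  apply/existsP; apply: contraNT nIJ; rewrite negb_exists => /forallP hle.
  have hle' : forall i, (I i <= J i)%N by move=> i; move: (hle i); rewrite -leqNgt.
  move: e; rewrite !mdegE => e.
  apply/eqP/ffunP => i; apply/eqP; rewrite eqn_leq hle' /=.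
  apply: contraT; rewrite -ltnNge => lt.
  have : (\sum_(k < d) mono I k < \sum_(k < d) mono J k)%N.
    rewrite (bigD1 i) //= [X in (_ < X)%N](bigD1 i) //= !mnmE.
    rewrite -addSn; apply: leq_add => //.
    apply: leq_sum => k _; rewrite !mnmE; exact: hle'.
  by rewrite e ltnn.
rewrite (bigD1 i) //= !mnmE ffact_small // mul0n mul0r.
by [].
Qed.

Lemma Xp_D j p1 p2 : Xp j (p1 + p2) = Xp j p1 + Xp j p2.
Proof. by rewrite /Xp -big_split /=; apply: eq_bigr => k _; rewrite mderivD mulrDr. Qed.

Lemma Xp_Z j c p : Xp j (c *: p) = c *: Xp j p.
Proof. by rewrite /Xp scaler_sumr; apply: eq_bigr => k _; rewrite mderivZ scalerAr. Qed.

Lemma Xp_0 j : Xp j 0 = 0.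
Proof. by rewrite /Xp big1 // => k _; rewrite mderiv0 mulr0. Qed.

Lemma XpI_lin I (s : seq (mi d)) (c : mi d -> R) :
  XpI I (\sum_(J <- s) c J *: 'X_[mono J]) = \sum_(J <- s) c J *: XpI I 'X_[mono J].
Proof.
have gen : forall (L : seq 'I_d) (F : mi d -> {mpoly R[d]}),
    foldr Xp (\sum_(J <- s) c J *: F J) L = \sum_(J <- s) c J *: foldr Xp (F J) L.
  move=> L F; elim: L => [|j L ih] //=.
  rewrite ih; elim: s {ih} => [|J s' ihs]; first by rewrite !big_nil Xp_0.
  by rewrite !big_cons Xp_D Xp_Z ihs.
rewrite XpI_sI gen; apply: eq_bigr => J _; by rewrite XpI_sI.
Qed.

Lemma XI_Pi_e I (P : mi d -> R) (r : seq (mi d)) :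
  (forall x, Pi_e P x = \sum_(J <- r) P J * eta_mon J x) ->
  XI G I (Pi_e P) 0 = \sum_(J <- r) P J * (XpI I 'X_[mono J])@_0%MM.
Proof.
move=> h.
have -> : Pi_e P = pfun (\sum_(J <- r) P J *: 'X_[mono J]).
  apply/funext => x; rewrite h /pfun raddf_sum /=; apply: eq_bigr => J _.
  by rewrite mevalZ -pfun_eta.
rewrite XI_pfun pfun0 XpI_lin raddf_sum /=; apply: eq_bigr => J _.
by rewrite mcoeffZ.
Qed.

End Grp.

Section Helpers.
Variable R : realType.

Lemma sum_le_sub (T : eqType) (r s : seq T) (F : T -> R) :
  uniq r -> {subset r <= s} -> (forall i, 0 <= F i) ->
  \sum_(i <- r) F i <= \sum_(i <- undup s) F i.
Proof.
move=> ur rs F0.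
have -> : \sum_(i <- undup s) F i =
   \sum_(i <- undup s | i \in r) F i + \sum_(i <- undup s | i \notin r) F i.
  exact: (bigID (fun i => i \in r)).
have -> : \sum_(i <- undup s | i \in r) F i = \sum_(i <- r) F i.
  rewrite -big_filter; apply: perm_big; apply: uniq_perm.
  - by rewrite filter_uniq // undup_uniq.
  - exact: ur.
  move=> x; rewrite mem_filter mem_undup; apply/andP/idP => [[]//|xr].
  by split => //; apply: rs.
by rewrite lerDl sumr_ge0.
Qed.

Lemma term_le_sum (T : eqType) (s : seq T) (F : T -> R) i :
  uniq s -> i \in s -> (forall j, 0 <= F j) -> F i <= \sum_(j <- s) F j.
Proof.
move=> us his F0; rewrite (bigD1_seq i) //= lerDl.
by apply: sumr_ge0 => j _.
Qed.

Lemma sum_const_le (T : Type) (s : seq T) (P : pred T) (F : T -> R) (c : R) :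
  (forall i, P i -> F i <= c) -> 0 <= c ->
  \sum_(i <- s | P i) F i <= (size s)%:R * c.
Proof.
move=> hF c0; elim: s => [|x s ih]; first by rewrite big_nil mul0r.
rewrite big_cons /= -addn1 natrD mulrDl mul1r.
case: ifP => Px.
  by rewrite addrC; apply: lerD => //; exact: hF.
by apply: le_trans ih _; rewrite lerDl.
Qed.

End Helpers.

Section Norms.
Variables (R : realType) (d : nat) (G : homgroup R d).
Variable (N : R -> (mi d -> R) -> R).
Hypothesis hN : forall a, grade_norm G a (N a).

Definition Ta (a : R) (f : mi d -> R) := forall I, hdeg G I != a -> f I = 0.

Lemma N_hom a c f : Ta a f -> N a (fun I => c * f I) = `|c| * N a f.
Proof. by have [_ [h _]] := hN a; apply: h. Qed.

Lemma N_tri a f g : Ta a f -> Ta a g -> N a (fun I => f I + g I) <= N a f + N a g.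
Proof. by have [h _] := hN a; apply: h. Qed.

Lemma Ta0 a : Ta a (fun _ => 0).
Proof. by []. Qed.

Lemma N_0 a : N a (fun _ => 0) = 0.
Proof.
have h := N_hom 0 (@Ta0 a).
transitivity (N a (fun I => 0 * (fun _ : mi d => (0:R)) I)).
  by congr (N a _); apply/funext => I; rewrite mulr0.
by rewrite h normr0 mul0r.
Qed.

Lemma N_ge0 a f : Ta a f -> 0 <= N a f.
Proof.
move=> hf.
have hf' : Ta a (fun I => -1 * f I) by move=> I /hf ->; rewrite mulr0.
have := N_tri hf hf'; rewrite (N_hom _ hf) normrN normr1 mul1r.
have -> : (fun I => f I + -1 * f I) = (fun _ => 0).
  by apply/funext => I; rewrite mulN1r subrr.
by rewrite N_0; lra.
Qed.

Definition sumf (s : seq (mi d)) (g : mi d -> mi d -> R) : mi d -> R :=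
  foldr (fun I acc => fun K => g I K + acc K) (fun _ => 0) s.

Lemma sumf_eval s g K : sumf s g K = \sum_(I <- s) g I K.
Proof. by elim: s => [|I s ih] /=; rewrite ?big_nil ?big_cons ?ih. Qed.

Lemma N_sumf a s g : (forall I, Ta a (g I)) ->
  N a (sumf s g) <= \sum_(I <- s) N a (g I).
Proof.
move=> hg; elim: s => [|I s ih] /=; first by rewrite big_nil N_0.
have hs : Ta a (sumf s g).
  by move=> K hK; rewrite sumf_eval big1 // => J _; apply: hg.
rewrite big_cons; apply: le_trans (N_tri (hg I) hs) _.
by rewrite lerD2l.
Qed.

End Norms.

Fixpoint Kf (R : realType) (B : R) (n : nat) : R :=
  match n with 0 => 0 | n'.+1 => Kf B n' + 1 + B * Kf B n' end.

Lemma Kf_ge0 (R : realType) (B : R) n : 0 <= B -> 0 <= Kf B n.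
Proof.
move=> B0; elim: n => [|n ih] //=.
by apply: addr_ge0; [apply: addr_ge0 | apply: mulr_ge0].
Qed.

Lemma Kf_S (R : realType) (B : R) n : 0 <= B -> Kf B n <= Kf B n.+1.
Proof.
move=> B0 /=; rewrite -addrA lerDl; apply: addr_ge0 => //.
by apply: mulr_ge0 => //; exact: Kf_ge0.
Qed.

Section Main.
Variables (R : realType) (d : nat) (G : homgroup R d).
Variable q : 'I_d -> {mpoly R[d + d]}.
Hypothesis hq : forall k x y, hg_mul G x y ord0 k = mpoly.meval (fun i => row_mx x y ord0 i) (q k).
Variables (delta : R) (N : R -> (mi d -> R) -> R).
Hypothesis hN : forall a, grade_norm G a (N a).
Hypothesis hd : 0 < delta.

Local Notation Mv I J := ((XpI q I 'X_[mono J])@_0%MM).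

Definition Nb := archimedean.Num.bound delta.

Definition box0 : seq (mi d) := [seq [ffun j => nat_of_ord (f j)] | f : {ffun 'I_d -> 'I_Nb} <- enum {ffun 'I_d -> 'I_Nb}].
Definition box := undup box0.

Lemma hdeg_ge (I : mi d) (j : 'I_d) : (I j)%:R <= hdeg G I.
Proof.
rewrite /hdeg (bigD1 j) //= -[X in X <= _]addr0; apply: lerD.
  apply: ler_peMl => //; exact: hg_s_ge1.
apply: sumr_ge0 => k _; apply: mulr_ge0 => //.
by apply: le_trans (hg_s_ge1 G k).
Qed.

Lemma in_box0 (I : mi d) : hdeg G I < delta -> I \in box0.
Proof.
move=> hI.
have hj : forall j, (I j < Nb)%N.
  move=> j; rewrite -(ltr_nat R); apply: le_lt_trans (hdeg_ge I j) _.
  apply: lt_trans hI _; apply: archimedean.Num.Theory.archi_boundP.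
  exact: ltW.
apply/mapP; exists [ffun j => Ordinal (hj j)]; first by rewrite mem_enum.
by apply/ffunP => j; rewrite !ffunE.
Qed.

Definition Mb := \sum_(I <- box) \sum_(J <- box) `|Mv I J|.

Lemma Mv_le (I J : mi d) : I \in box -> J \in box -> `|Mv I J| <= Mb.
Proof.
move=> hI hJ; rewrite /Mb.
apply: le_trans (term_le_sum (F := fun I => \sum_(J <- box) `|Mv I J|) (undup_uniq _) hI _).
  by apply: (term_le_sum (F := fun J => `|Mv I J|)) => //; exact: undup_uniq.
by move=> K; apply: sumr_ge0.
Qed.

Section PerP.
Variables (P : mi d -> R) (eps : R).
Hypothesis hP : in_Tlt G delta P.
Hypothesis he : 0 <= eps <= 1.
Hypothesis hv : forall I : mi d, hdeg G I < delta ->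
  `| XI G I (Pi_e P) 0 | <= powR eps (delta - hdeg G I).

Local Open Scope classical_set_scope.
Definition A := [set J : mi d | P J != 0].
Local Close Scope classical_set_scope.

Lemma A_fin : finite_set A.
Proof.
apply: (sub_finite_set (B := [set` box0])); last exact: finite_seq.
by move=> J /= hJ; apply: in_box0; apply: hP.
Qed.

Definition r : seq (mi d) := finmap.enum_fset (fset_set A).

Lemma r_mem J : (J \in r) = (P J != 0).
Proof.
rewrite /r (in_fset_set A_fin).
by apply/idP/idP => [/set_mem //|h]; apply: mem_set.
Qed.

Lemma r_uniq : uniq r.
Proof. exact: finmap.fset_uniq. Qed.

Lemma Pi_e_r x : Pi_e P x = \sum_(J <- r) P J * eta_mon J x.
Proof. by rewrite /Pi_e fsbig_finite //; exact: A_fin. Qed.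

Definition B := (size box)%:R * Mb.

Lemma Mb_ge0 : 0 <= Mb.
Proof. by apply: sumr_ge0 => I _; apply: sumr_ge0. Qed.

Lemma B_ge0 : 0 <= B.
Proof. by apply: mulr_ge0 => //; exact: Mb_ge0. Qed.

Lemma r_box J : J \in r -> J \in box.
Proof. by rewrite r_mem => /hP h; rewrite mem_undup; apply: in_box0. Qed.

Lemma claim n : forall I : mi d, (mdeg (mono I) < n)%N ->
  `|P I| <= Kf B n * powR eps (delta - hdeg G I).
Proof.
elim: n => [|n ih] I hI; first by rewrite ltn0 in hI.
have pe0 : 0 <= powR eps (delta - hdeg G I) by exact: powR_ge0.
case: (ltnP (mdeg (mono I)) n) => hlt.
  apply: le_trans (ih I hlt) _; apply: ler_wpM2r => //; apply: Kf_S; exact: B_ge0.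
have hn : mdeg (mono I) = n by apply/eqP; rewrite eqn_leq hlt -ltnS hI.
case: (eqVneq (P I) 0) => [->|nzI].
  by rewrite normr0 mulr_ge0 // Kf_ge0 // B_ge0.
have hdI : hdeg G I < delta by apply: hP.
have Ir : I \in r by rewrite r_mem.
have e := XI_Pi_e hq I Pi_e_r.
rewrite (bigD1_seq I) //= in e; last exact: r_uniq.
set S := \sum_(J <- r | J != I) P J * Mv I J in e.
set pw := powR eps (delta - hdeg G I) in pe0 *.
have MII : Mv I I = (\prod_(i < d) (I i)`!)%:R by rewrite (Mv_F4 hq (erefl _)) eqxx.
have f1 : 1 <= Mv I I.
  by rewrite MII ler1n prodn_gt0 // => i; exact: fact_gt0.
have Kn0 : 0 <= Kf B n by apply: Kf_ge0; exact: B_ge0.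
have hS : `|S| <= (size box)%:R * (Kf B n * pw * Mb).
  apply: le_trans (ler_norm_sum _ _ _) _.
  have c0 : 0 <= Kf B n * pw * Mb by rewrite !mulr_ge0 // Mb_ge0.
  apply: (@le_trans _ _ ((size r)%:R * (Kf B n * pw * Mb))).
    apply: sum_const_le => // J nJI; rewrite normrM.
    case: (eqVneq (P J) 0) => [->|nzJ]; first by rewrite normr0 mul0r.
    case: (eqVneq (Mv I J) 0) => [->|nzM]; first by rewrite normr0 mulr0.
    have hdJ := Mv_hom hq nzM.
    have hle : (mdeg (mono J) <= mdeg (mono I))%N.
      rewrite leqNgt; apply/negP => lt; move: nzM; by rewrite (Mv_F3 hq lt) eqxx.
    have hneq : mdeg (mono J) != mdeg (mono I).
      have nIJ : (I == J) = false by rewrite eq_sym (negPf nJI).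
      apply/negP => /eqP eq; move: nzM; by rewrite (Mv_F4 hq (esym eq)) nIJ eqxx.
    have ltJ : (mdeg (mono J) < n)%N by rewrite -hn ltn_neqAle hneq hle.
    have := ih J ltJ; rewrite -hdJ -/pw => hPJ.
    apply: ler_pM => //.
    apply: Mv_le; [apply: r_box; exact: Ir | apply: r_box; by rewrite r_mem].
  apply: ler_wpM2r => //; rewrite ler_nat; apply: uniq_leq_size; first exact: r_uniq.
  exact: r_box.
have h1 : `|P I| <= `|P I * Mv I I|.
  by rewrite normrM (ger0_norm (le_trans ler01 f1)) ler_peMr.
have e2 : P I * Mv I I = XI G I (Pi_e P) 0 - S by rewrite e addrK.
rewrite e2 in h1.
have h2 := le_trans h1 (ler_normB _ _).
have h3 := hv hdI; rewrite -/pw in h3.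
have -> : Kf B n.+1 * pw = pw + (size box)%:R * (Kf B n * pw * Mb) + Kf B n * pw.
  by rewrite /= /B; ring.
apply: le_trans h2 _; rewrite -addrA; apply: lerD => //.
by rewrite -[X in X <= _]addr0; apply: lerD => //; apply: mulr_ge0.
Qed.

Definition eI (I : mi d) : mi d -> R := fun K => (K == I)%:R.

Definition Cst := \sum_(I <- box) Kf B (mdeg (mono I)).+1 * N (hdeg G I) (eI I).

Lemma Ta_eI I : Ta G (hdeg G I) (eI I).
Proof.
move=> K hK; rewrite /eI; case: eqP => // eKI.
by rewrite eKI eqxx in hK.
Qed.

Lemma final a : N a (Tcomp G a P) <= Cst * powR eps (delta - a).
Proof.
set g := fun I => if hdeg G I == a then (fun K => P I * eI I K) else (fun _ : mi d => 0 : R).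
have Tg : forall I, Ta G a (g I).
  move=> I K hK; rewrite /g; case: eqP => // eIa.
  rewrite /eI; case: eqP => [eKI|]; last by rewrite mulr0.
  by rewrite eKI eIa eqxx in hK.
have -> : Tcomp G a P = sumf r g.
  apply/funext => K; rewrite sumf_eval /Tcomp.
  case: (boolP (K \in r)) => Kr.
    rewrite (bigD1_seq K) //=; last exact: r_uniq.
    rewrite big1 ?addr0.
      by rewrite /g; case: eqP => _ //; rewrite /eI eqxx mulr1.
    move=> I nIK; rewrite /g; case: ifP => // _.
    by rewrite /eI eq_sym (negPf nIK) mulr0.
  have -> : P K = 0 by apply/eqP; move: Kr; rewrite r_mem negbK.
  rewrite if_same big_seq big1 // => I Ir; rewrite /g; case: ifP => // _.
  have nKI : (K == I) = false by apply/negP => /eqP eKI; rewrite eKI Ir in Kr.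
  by rewrite /eI nKI mulr0.
apply: le_trans (N_sumf hN r Tg) _.
set pw := powR eps (delta - a).
have pw0 : 0 <= pw by exact: powR_ge0.
set F := fun I => Kf B (mdeg (mono I)).+1 * N (hdeg G I) (eI I).
have F0 : forall I, 0 <= F I.
  move=> I; apply: mulr_ge0; first by apply: Kf_ge0; exact: B_ge0.

  exact: (N_ge0 hN (@Ta_eI I)).
apply: (@le_trans _ _ (\sum_(I <- r) pw * F I)).
  apply: ler_sum => I _; rewrite /g; case: eqP => eIa; last first.
    by rewrite (N_0 hN) mulr_ge0.
  have hTa : Ta G a (eI I) by rewrite -eIa; exact: Ta_eI.
  rewrite (N_hom hN _ hTa) /F eIa.
  have := claim (ltnSn (mdeg (mono I))); rewrite eIa -/pw => hc.
  rewrite mulrA [pw * _]mulrC.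
  by apply: ler_wpM2r => //; exact: (N_ge0 hN hTa).
rewrite -mulr_sumr mulrC; apply: ler_wpM2r => //.
apply: sum_le_sub => //; first exact: r_uniq.
by move=> J; rewrite r_mem => /hP; exact: in_box0.
Qed.

End PerP.

End Main.

Theorem lemma3p9 (R : realType) (d : nat) (G : homgroup R d) (delta : R)
  (N : R -> (mi d -> R) -> R) (hN : forall a, grade_norm G a (N a)) :
  0 < delta ->
  exists C : R, forall (P : mi d -> R) (eps : R),
    in_Tlt G delta P -> 0 <= eps <= 1 ->
    (forall I : mi d, hdeg G I < delta ->
       `| XI G I (Pi_e P) 0 | <= powR eps (delta - hdeg G I)) ->
    forall a : R, a <= delta -> N a (Tcomp G a P) <= C * powR eps (delta - a).
Proof.
move=> hd.
have [q hq] := boolp.choice (hg_poly G).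
exists (Cst G q delta N) => P eps hP _ hv a _.
exact: (final hq hN hd hP hv).
Qed.
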